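(* Let $I$ and $J$ be compositions of $n$, and let $M(I,J)$ be the set of matrices $M$ with nonnegative integer entries and no zero row such that $\mathrm{WC}(w(M))=I$ and the vector of column sums of $M$ is $J$. Then the coefficient $C_I^J(q)$ of $\Psi_I$ in $S^J(q)$ is \[ C_I^J(q)=\sum_{M\in M(I,J)}q^{\mathrm{sinv}(w(M))}. \]
   Context: For a nonnegative integer matrix $M=(m_{ij})$, $w(M)$ is the word obtained by reading the entries columnwise (columns left to right, each column top to bottom) and writing the row index $i$ repeated $m_{ij}$ times for each entry $m_{ij}$. A composition of $n$ is a sequence of positive integers with sum $n$. Over $\mathbb K(q)$ ($\mathrm{char}\,\mathbb K=0$): packed words are words with letter set $\{1,\dots,m\}$ for some $m$; $\mathrm{pack}$ replaces the $t$-th smallest letter by $t$. For a packed word $w=w_1\cdots w_n$: $\mathrm{WC}(w)$ is the composition of $n$ whose descent set (partial sums other than $n$) is the set of positions $p<n$ with $w_p$ not occurring in $w_{p+1}\cdots w_n$; $\mathrm{sinv}(w)=\#\{i<j:w_i>w_j,\ w_j\text{ not occurring in }w_{j+1}\cdots w_n\}$. $\mathbf{WQSym}$ has basis $\mathbf M_u$ with $\mathbf M_{u'}\mathbf M_{u''}=\sum\mathbf M_u$ over packed $u=v\cdot w$ with $\mathrm{pack}(v)=u'$, $\mathrm{pack}(w)=u''$; $\mathbf M_{u'}\star_q\mathbf M_{u''}=\sum q^{\mathrm{sinv}(u)-\mathrm{sinv}(u')-\mathrm{sinv}(u'')}\mathbf M_u$ (associative). $\mathbf{Sym}$ is the quotient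 by the span of $\mathbf M_u-\mathbf M_v$ with $\mathrm{WC}(u)=\mathrm{WC}(v)$, $\zeta$ the quotient map, $\Psi_I=\zeta(\mathbf M_u)$ for $\mathrm{WC}(u)=I$ (a basis). $\tilde S_m=\sum\mathbf M_u$ over nondecreasing packed $u$ of length $m$; for $J=(j_1,\dots,j_l)$, $S^J(q)=\zeta(\tilde S_{j_1}\star_q\cdots\star_q\tilde S_{j_l})$. *)

(* Defs.v *)
From HB Require Import structures.
From mathcomp Require Import all_boot all_order all_algebra.
From mathcomp Require Import fraction.
Set Implicit Arguments. Unset Strict Implicit. Unset Printing Implicit Defensive.
Import Order.TTheory GRing.Theory Num.Theory.

(* Words are seq nat; letters of packed words are 1..m. *)
Definition maxl (w : seq nat) : nat := foldr maxn 0 w.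

Definition packed (w : seq nat) : bool :=
  all (fun x => 0 < x) w && all (fun t => t \in w) (iota 1 (maxl w)).

Definition pack (w : seq nat) : seq nat :=
  [seq (index x (sort leq (undup w))).+1 | x <- w].

Definition lastocc (w : seq nat) (p : nat) : bool :=
  nth 0 w p \notin drop p.+1 w.

(* WC(w): composition of size w whose descent set is the set of (1-indexed)
   positions p < size w such that w_p does not occur in w_{p+1}...w_n. *)
Definition WC (w : seq nat) : seq nat :=
  if size w is 0 then [::] else
  let D := [seq p <- iota 1 (size w).-1 | lastocc w p.-1] in
  pairmap (fun a b => b - a) 0 (rcons D (size w)).

Definition sinv (w : seq nat) : nat :=
  \sum_(j < size w) \sum_(i < j) ((nth 0 w j < nth 0 w i) && lastocc w j : nat).

Definition is_composition (n : nat) (I : seq nat) : bool :=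
  all (fun x => 0 < x) I && (sumn I == n).

Local Open Scope ring_scope.

Definition Kq (K : fieldType) := {fraction {poly K}}.
Definition qK (K : fieldType) : Kq K := tofrac 'X.

(* An element of WQSym over K(q): its coefficient function u |-> [M_u],
   meaningful on packed words u (finitely supported in all uses below). *)
Definition WQ (K : fieldType) := seq nat -> Kq K.

(* The bilinear extension of
   M_{u'} *_q M_{u''} = sum_{u = v.w, pack v = u', pack w = u''}
                           q^{sinv u - sinv u' - sinv u''} M_u,
   expressed coefficientwise: for a packed u each split u = v.w
   (v = take k u) determines u' = pack v and u'' = pack w. *)
Definition star_q (K : fieldType) (f g : WQ K) : WQ K := fun u =>
  if packed u then
    \sum_(k < (size u).+1)
      f (pack (take k u)) * g (pack (drop k u)) *
      qK K ^ ((sinv u)%:Z - (sinv (pack (take k u)))%:Z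
                          - (sinv (pack (drop k u)))%:Z)
  else 0.

(* tilde S_m = sum of M_u over nondecreasing packed u of length m *)
Definition Stilde (K : fieldType) (m : nat) : WQ K := fun u =>
  (packed u && sorted leq u && (size u == m))%:R.

Definition unitWQ (K : fieldType) : WQ K := fun u => (u == [::])%:R.

Definition Sprod (K : fieldType) (J : seq nat) : WQ K :=
  foldr (fun j acc => star_q (Stilde K j) acc) (unitWQ K) J.

(* packed words of length n are words over {1..n}; encode them by tuples *)
Definition word_of (n : nat) (t : n.-tuple 'I_n) : seq nat :=
  [seq (val i).+1 | i <- t].

(* coefficient of Psi_I in zeta(F), where zeta(M_u) = Psi_{WC(u)}:
   the sum of the coefficients of F at packed u (of length n) with WC(u) = I *)
Definition coeffPsi (K : fieldType) (n : nat) (I : seq nat) (F : WQ K) : Kq K :=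
  \sum_(t : n.-tuple 'I_n | packed (word_of t) && (WC (word_of t) == I))
     F (word_of t).

Definition wM (r l : nat) (M : 'M[nat]_(r, l)) : seq nat :=
  flatten [seq nseq (M i j) (val i).+1 | j <- enum 'I_l, i <- enum 'I_r].

Definition inMIJ (I J : seq nat) (r : nat) (M : 'M[nat]_(r, size J)) : bool :=
  [forall i, exists j, M i j != 0%N] && (WC (wM M) == I) &&
  [forall j : 'I_(size J), (\sum_(i < r) M i j)%N == nth 0%N J j].

Arguments inMIJ I J {r} M.

(* Main.v *)
Require Import Defs.
From HB Require Import structures.
From mathcomp Require Import all_boot all_order all_algebra.
From mathcomp Require Import fraction zify.
Set Warnings "-notation-overridden,-ambiguous-paths".
Import Order.TTheory GRing.Theory Num.Theory.

Lemma maxl_leq w m : (maxl w <= m)%N = all (fun x => x <= m)%N w.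
Proof. by elim: w => //= a w IH; rewrite geq_max IH. Qed.

Lemma mem_maxl w x : x \in w -> (x <= maxl w)%N.
Proof.
move=> xw; have : all (fun x => x <= maxl w)%N w by rewrite -maxl_leq.
by move/allP/(_ x xw).
Qed.

Definition packf (w : seq nat) x := (index x (sort leq (undup w))).+1.

Lemma packE w : pack w = map (packf w) w. Proof. by []. Qed.

Lemma packf_mono w : {in w &, {mono packf w : x y / (x <= y)%N}}.
Proof.
move=> x y xw yw; set s := sort leq (undup w).
have ss : sorted leq s := sort_sorted leq_total _.
have xs : x \in s by rewrite mem_sort mem_undup.
have ys : y \in s by rewrite mem_sort mem_undup.
rewrite /packf ltnS -/s; apply/idP/idP => h.
  exact: (sorted_leq_index leq_trans leqnn ss _ _ xs ys h).
rewrite leqNgt; apply/negP => h'.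
have yx := sorted_ltn_index leq_trans ss _ _ ys xs h'.
have exy : x = y by apply/eqP; rewrite eqn_leq h yx.
by rewrite exy ltnn in h'.
Qed.

Lemma packed_pack w : packed (pack w).
Proof.
rewrite /packed; apply/andP; split.
  by apply/allP => x /mapP [y _ ->].
set s := sort leq (undup w).
have us : uniq s by rewrite sort_uniq undup_uniq.
have hm : (maxl (pack w) <= size s)%N.
  rewrite maxl_leq; apply/allP => x /mapP [y yw ->].
  by rewrite /packf -/s index_mem mem_sort mem_undup.
apply/allP => t; rewrite mem_iota => /andP [t1 tle].
have tl : (t.-1 < size s)%N by move: tle hm; lia.
set x := nth 0%N s t.-1.
have xs : x \in s by rewrite mem_nth.
have xw : x \in w by move: xs; rewrite mem_sort mem_undup.
have -> : t = packf w x by rewrite /packf -/s index_uniq //; lia.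
by rewrite packE map_f.
Qed.

Lemma sinv_sorted w : sorted leq w -> sinv w = 0%N.
Proof.
move=> sw; rewrite /sinv big1 // => j _; rewrite big1 // => i _.
have : (nth 0 w i <= nth 0 w j)%N.
  apply: (sorted_leq_nth leq_trans leqnn 0 sw); rewrite ?inE //.
  - exact: ltn_trans (ltn_ord i) (ltn_ord j).
  - exact: ltnW (ltn_ord i).
by rewrite leqNgt => /negbTE ->.
Qed.

Definition segsorted (J w : seq nat) :=
  (size w == sumn J) && all (sorted leq) (reshape J w).

Lemma mem_reshape_sub (J d : seq nat) (s : seq nat) : s \in reshape J d -> {subset s <= d}.
Proof.
elim: J d => [|j J IH] d //=; rewrite in_cons => /orP [/eqP -> | /IH h] x.
  exact: mem_take.
by move/h; apply: mem_drop.
Qed.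

Lemma sorted_pack v : sorted leq (pack v) = sorted leq v.
Proof. by rewrite packE (mono_sorted_in (packf_mono v)) //; apply/allP. Qed.

Lemma segsorted_pack J d : segsorted J (pack d) = segsorted J d.
Proof.
rewrite /segsorted packE size_map -map_reshape all_map; congr andb.
apply: eq_in_all => s sin /=.
by rewrite (mono_sorted_in (packf_mono d)) //; apply/allP => x /(mem_reshape_sub _ _ _ sin).
Qed.

Lemma segsorted_cons j J u : (j <= size u)%N ->
  segsorted (j :: J) u = sorted leq (take j u) && segsorted J (drop j u).
Proof.
move=> ju; rewrite /segsorted /= size_drop.
have -> : (size u == j + sumn J) = (size u - j == sumn J).
  by apply/eqP/eqP; lia.
by case: (_ == _); case: sorted.
Qed.

Lemma sorted_blocks (T : eqType) (s : seq T) (c key : T -> nat) :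
  sorted leq (map key s) -> sorted leq (flatten [seq nseq (c x) (key x) | x <- s]).
Proof.
rewrite !(sorted_pairwise leq_trans); elim: s => //= x s IH /andP [hx hs].
rewrite pairwise_cat IH // andbT; apply/andP; split.
  apply/allrelP => y z; rewrite mem_nseq => /andP [_ /eqP ->] /flatten_mapP [x' x's].
  rewrite mem_nseq => /andP [_ /eqP ->].
  by move/allP: hx; apply; apply: map_f.
elim: (c x) => //= k IHk; rewrite IHk andbT.
by apply/allP => y; rewrite mem_nseq => /andP [_ /eqP ->].
Qed.

Section Blocks.
Variable r : nat.

Definition blocks (f : 'I_r -> nat) : seq nat :=
  flatten [seq nseq (f i) (val i).+1 | i <- enum 'I_r].

Lemma sorted_enum_succ : sorted leq [seq (val i).+1 | i <- enum 'I_r].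
Proof.
have -> : [seq (val i).+1 | i <- enum 'I_r] = map succn (map val (enum 'I_r)).
  by rewrite -map_comp.
by rewrite val_enum_ord sorted_map; exact: (iota_sorted 0 r).
Qed.

Lemma blocks_sorted f : sorted leq (blocks f).
Proof. exact: sorted_blocks sorted_enum_succ. Qed.

Lemma sum_enum (F : 'I_r -> nat) :
  sumn [seq F i | i <- enum 'I_r] = (\sum_(i < r) F i)%N.
Proof. by rewrite sumnE big_map big_enum; apply: eq_bigl. Qed.

Lemma count_blocks_sum f x :
  count_mem x (blocks f) = (\sum_(i < r) (x == (val i).+1) * f i)%N.
Proof.
rewrite /blocks count_flatten -map_comp sum_enum; apply: eq_bigr => i _.
by rewrite /= count_nseq /= eq_sym.
Qed.

Lemma count_blocks f (i : 'I_r) : count_mem (val i).+1 (blocks f) = f i.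
Proof.
rewrite count_blocks_sum (bigD1 i) //= eqxx mul1n big1 ?addn0 // => k nk.
by rewrite eqSS val_eqE eq_sym (negbTE nk).
Qed.

Lemma mem_blocks f x : x \in blocks f -> (0 < x <= r)%N.
Proof.
by move/flatten_mapP => [i _]; rewrite mem_nseq => /andP [_ /eqP ->] /=.
Qed.

Lemma size_blocks f : size (blocks f) = (\sum_(i < r) f i)%N.
Proof.
rewrite /blocks size_flatten /shape -map_comp sum_enum.
by apply: eq_bigr => i _; rewrite /= size_nseq.
Qed.

Lemma blocks_recon (s : seq nat) : sorted leq s ->
  {in s, forall x, 0 < x <= r}%N ->
  blocks (fun i => count_mem (val i).+1 s) = s.
Proof.
move=> ss hs; apply: (sorted_eq leq_trans anti_leq) => //.
  exact: blocks_sorted.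
apply/allP => x _; apply/eqP.
case hx: (0 < x <= r)%N.
  have xr : (x.-1 < r)%N by move: hx; lia.
  have -> : x = (val (Ordinal xr)).+1 by rewrite /=; move: hx; lia.
  by rewrite count_blocks.
rewrite count_blocks_sum big1; last first.
  move=> [i ilt] _ /=; case: eqP => [ex|]; last by rewrite mul0n.
  by move: hx ilt; rewrite ex; lia.
apply/esym/count_memPn; apply/negP => /hs; by rewrite hx.
Qed.

End Blocks.
Arguments blocks {r}.

Lemma map_nth_enum (T : Type) (x0 : T) (s : seq T) m : size s = m ->
  [seq nth x0 s (val j) | j <- enum 'I_m] = s.
Proof.
move=> <-.
have -> : [seq nth x0 s (val j) | j <- enum 'I_(size s)] =
          map (nth x0 s) (map val (enum 'I_(size s))) by rewrite -map_comp.
by rewrite val_enum_ord; exact: mkseq_nth.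
Qed.

Lemma wME r l (N : 'M[nat]_(r, l)) :
  wM N = flatten [seq blocks (fun i => N i j) | j <- enum 'I_l].
Proof.
rewrite /wM /blocks; elim: (enum 'I_l) => [|j s IH] //.
by rewrite allpairs_cons flatten_cat IH.
Qed.

Lemma eq_blocks {r} (f f' : 'I_r -> nat) : f =1 f' -> blocks f = blocks f'.
Proof. by move=> E; rewrite /blocks; congr flatten; apply: eq_map => i; rewrite E. Qed.

Section Main.
Variables (n : nat) (I J : seq nat).
Hypothesis hJ : is_composition n J.

Definition tup (w : seq nat) : n.-tuple 'I_n :=
  [tuple insubd i (nth 0 w i).-1 | i < n].

Lemma word_ofE (t : n.-tuple 'I_n) :
  word_of t = [seq (val (tnth t i)).+1 | i <- enum 'I_n].
Proof. by rewrite /word_of -{1}(map_tnth_enum t) -map_comp. Qed.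

Lemma word_bound (t : n.-tuple 'I_n) x : x \in word_of t -> (0 < x <= n)%N.
Proof. by move/mapP => [i _ ->] /=. Qed.

Lemma word_tup w : size w = n -> {in w, forall x, 0 < x <= n}%N ->
  word_of (tup w) = w.
Proof.
move=> sw hw; rewrite word_ofE.
have -> : [seq (val (tnth (tup w) i)).+1 | i <- enum 'I_n] =
          [seq nth 0 w (val i) | i <- enum 'I_n].
  apply: eq_map => -[i ilt]; rewrite tnth_mktuple /=.
  have iw : (i < size w)%N by rewrite sw.
  have /andP [x0 xn] := hw _ (mem_nth 0 iw).
  rewrite insubdK ?prednK //.
  by change ((nth 0 w i).-1 < n)%N; move: x0 xn; case: (nth 0 w i).
by rewrite map_nth_enum.
Qed.

Lemma tup_word t : tup (word_of t) = t.
Proof.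
apply: eq_from_tnth => i; rewrite tnth_mktuple; apply: val_inj.
rewrite word_ofE (nth_map i) ?size_enum_ord // nth_ord_enum /=.
by rewrite insubdK //; change (val (tnth t i) < n)%N; exact: ltn_ord.
Qed.

Section FixedR.
Variables (r : nat).
Hypothesis hr : (r <= n)%N.

Definition gM (M : 'M['I_n.+1]_(r, size J)) : n.-tuple 'I_n :=
  tup (wM (map_mx val M)).

Definition Cm (t : n.-tuple 'I_n) : 'M['I_n.+1]_(r, size J) :=
  \matrix_(i, j) inord (count_mem (val i).+1 (nth [::] (reshape J (word_of t)) j)).

Definition Bp (t : n.-tuple 'I_n) :=
  packed (word_of t) && (WC (word_of t) == I) && segsorted J (word_of t)
  && (maxl (word_of t) == r).

Definition Ap (M : 'M['I_n.+1]_(r, size J)) := inMIJ I J (map_mx val M).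

Lemma A_props M : Ap M ->
  (Bp (gM M) && (Cm (gM M) == M)) /\ word_of (gM M) = wM (map_mx val M).
Proof.
rewrite /Ap /inMIJ => /andP [/andP [/forallP hrow hWC] /forallP hcol].
set N := map_mx val M.
set S := [seq blocks (fun i => N i j) | j <- enum 'I_(size J)].
have wE : wM N = flatten S by rewrite wME.
have shS : shape S = J.
  rewrite /shape -map_comp.
  transitivity [seq nth 0 J (val j) | j <- enum 'I_(size J)];
    last exact: map_nth_enum.
  by apply: eq_map => j /=; rewrite size_blocks; exact/eqP/hcol.
have rS : reshape J (wM N) = S by rewrite wE -shS flattenK.
have sJ : sumn J = n by case/andP: hJ => _ /eqP.
have szw : size (wM N) = n by rewrite wE size_flatten shS.
have letters : {in wM N, forall x, 0 < x <= r}%N.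
  by move=> x; rewrite wE => /flattenP [s /mapP [j _ ->]] /mem_blocks.
have inw : forall i : 'I_r, (val i).+1 \in wM N.
  move=> i; have /existsP [j hj] := hrow i.
  rewrite wE; apply/flattenP; exists (blocks (fun i => N i j)).
    by apply: map_f; rewrite mem_enum.
  by rewrite -has_pred1 has_count count_blocks lt0n.
have mx : maxl (wM N) = r.
  apply/eqP; rewrite eqn_leq maxl_leq; apply/andP; split.
    by apply/allP => x /letters /andP [].
  have [r0|r0] := posnP r; first by rewrite {1}r0.
  have ir : (r.-1 < r)%N by rewrite ltn_predL.
  by have := mem_maxl _ _ (inw (Ordinal ir)); rewrite /= prednK.
have wg : word_of (gM M) = wM N.
  by rewrite word_tup // => x /letters; move: hr; lia.
have pk : packed (wM N).
  rewrite /packed; apply/andP; split; first by apply/allP => x /letters /andP [].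
  apply/allP => x; rewrite mx mem_iota => /andP [x1 xr].
  have xr' : (x.-1 < r)%N by move: x1 xr; lia.
  by have := inw (Ordinal xr'); rewrite /= prednK.
split; last exact wg.
rewrite /Bp wg pk hWC mx eqxx /= andbT; apply/andP; split.
  rewrite /segsorted szw sJ eqxx rS /=.
  by apply/allP => s /mapP [j _ ->]; exact: blocks_sorted.
apply/eqP/matrixP => i j; rewrite mxE wg rS (nth_map j) ?size_enum_ord //.
by rewrite nth_ord_enum count_blocks /N mxE inord_val.
Qed.

Lemma B_props t : Bp t -> Ap (Cm t) /\ gM (Cm t) = t.
Proof.
move=> /andP [/andP [/andP [pk hWC] ss] /eqP mx].
have szw : size (word_of t) = n by rewrite size_map size_tuple.
have sJ : sumn J = n by case/andP: hJ => _ /eqP.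
set w := word_of t in pk hWC ss mx szw *.
set S := reshape J w.
have fS : flatten S = w by rewrite reshapeKr // szw sJ.
have szS : size S = size J by rewrite size_reshape.
have shS : shape S = J by rewrite reshapeKl // szw sJ.
have sortS : all (sorted leq) S by case/andP: ss.
have letters : {in w, forall x, 0 < x <= r}%N.
  move=> x xw; apply/andP; split.
    by move/andP: pk => [/allP /(_ x xw)].
  by rewrite -mx mem_maxl.
have Ssub : forall j : 'I_(size J), {subset nth [::] S j <= w}.
  move=> j x; apply: (mem_reshape_sub J w); apply: mem_nth; rewrite szS.
  exact: ltn_ord.
have cnt_le : forall (i : 'I_r) (j : 'I_(size J)),
    (count_mem (val i).+1 (nth [::] S j) < n.+1)%N.
  move=> i j; rewrite ltnS; apply: leq_trans (count_size _ _) _.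
  by rewrite /S nth_reshape size_take_min size_drop szw; lia.
set N := map_mx val (Cm t).
have NE : forall i j, N i j = count_mem (val i).+1 (nth [::] S j).
  by move=> i j; rewrite !mxE; apply: inordK; exact: cnt_le.
have colE : forall j : 'I_(size J), blocks (fun i => N i j) = nth [::] S j.
  move=> j; rewrite (@eq_blocks _ _ _ (fun i => NE i j)) blocks_recon //.
    by apply: (allP sortS); apply: mem_nth; rewrite szS ltn_ord.
  by move=> x /Ssub /letters.
have wN : wM N = w.
  rewrite wME.
  transitivity (flatten [seq nth [::] S (val j) | j <- enum 'I_(size J)]).
    by congr flatten; apply: eq_map => j; exact: colE.
  by rewrite map_nth_enum.
split; last by rewrite /gM -/N wN tup_word.
rewrite /Ap /inMIJ -/N wN hWC andbT; apply/andP; split.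
  apply/forallP => -[i ilt].
  have : (i.+1 \in w).
    move/andP: pk => [_ /allP]; apply; rewrite mx mem_iota.
    by move: ilt; lia.
  rewrite -fS => /flattenP [s sS xs]; apply/existsP.
  have js : (index s S < size J)%N by rewrite -szS index_mem.
  exists (Ordinal js); rewrite NE /= nth_index //.
  by rewrite -lt0n -has_count has_pred1.
apply/forallP => j.
rewrite (_ : (\sum_(i < r) N i j)%N = size (blocks (fun i => N i j))); last first.
  by rewrite size_blocks.
by have := congr1 (fun s => nth 0 s j) shS; rewrite /= (nth_map [::]) ?szS // colE => ->.
Qed.

End FixedR.
End Main.
Local Open Scope ring_scope.

Lemma qK_neq0 K : qK K != 0.
Proof. by rewrite /qK tofrac_eq0 polyX_eq0. Qed.

Lemma SprodE K J u : Sprod K J u =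
  if packed u && segsorted J u then qK K ^+ sinv u else 0.
Proof.
elim: J u => [|j J IH] u.
  rewrite /= /unitWQ /segsorted /=; case: u => [|a u] /=; last by rewrite andbF.
  by rewrite /sinv big_ord0 expr0.
rewrite /= {1}/star_q; case pu: (packed u) => //=.
case: (leqP j (size u)) => ju; last first.
  rewrite big1; last first.
    move=> [k kl] _; rewrite /Stilde size_map size_take /=.
    have -> : ((if (k < size u)%N then k else size u) == j) = false.
      by apply/negbTE; case: ifP => hk; move: hk kl ju; lia.
    by rewrite andbF !mul0r.
  by rewrite /segsorted /=; have -> : (size u == j + sumn J) = false by apply/negbTE; lia.
rewrite (bigD1 (Ordinal (ju : (j < (size u).+1)%N))) //= big1 ?addr0; last first.
  move=> [k kl] /eqP nk; rewrite /Stilde size_map size_take /=.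
  have -> : ((if (k < size u)%N then k else size u) == j) = false.
    apply/negbTE; apply/eqP => e; apply: nk; apply: val_inj => /=.
    by move: e kl; case: ifP => hk; move: hk; lia.
  by rewrite andbF !mul0r.
rewrite /Stilde size_map size_takel // eqxx andbT packed_pack sorted_pack.
rewrite IH packed_pack segsorted_pack segsorted_cons //.
case st: (sorted leq (take j u)); last by rewrite !mul0r.
case sd: (segsorted J (drop j u)); last by rewrite mulr0 mul0r.
rewrite mul1r (sinv_sorted (pack (take j u))) ?sorted_pack //=.
rewrite !exprnP -expfzDr ?qK_neq0 //.
by congr (_ ^ _); lia.
Qed.

Lemma per_r K n I J (hJ : is_composition n J) (r : nat) (hr : (r <= n)%N) :
  \sum_(t : n.-tuple 'I_n | Bp n I J r t) qK K ^+ sinv (word_of t) =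
  \sum_(M : 'M['I_n.+1]_(r, size J) | Ap n I J r M) qK K ^+ sinv (wM (map_mx val M)).
Proof.
rewrite (reindex_onto (gM n J r) (Cm n J r)) => [|t /(@B_props n I J hJ r hr) [] //].
apply: eq_big => M.
  apply/idP/idP => [/andP [bg /eqP <-]|aM].
    by case: (@B_props n I J hJ r hr _ bg).
  by case: (@A_props n I J hJ r hr _ aM).
move=> /andP [bg /eqP e].
have aM : Ap n I J r M by case: (@B_props n I J hJ r hr _ bg); rewrite e.
by case: (@A_props n I J hJ r hr _ aM) => _ ->.
Qed.

Theorem mainTheorem8 (K : fieldType) (hK : [pchar K] =i pred0)
  (n : nat) (I J : seq nat)
  (hI : is_composition n I) (hJ : is_composition n J) :
  coeffPsi n I (Sprod K J) =
  \sum_(r < n.+1)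
    \sum_(M : 'M['I_n.+1]_(r, size J) | inMIJ I J (map_mx val M))
      qK K ^+ sinv (wM (map_mx val M)).
Proof.
have -> : coeffPsi n I (Sprod K J) =
  \sum_(t : n.-tuple 'I_n | packed (word_of t) && (WC (word_of t) == I)
                            && segsorted J (word_of t)) qK K ^+ sinv (word_of t).
  rewrite /coeffPsi big_mkcond [RHS]big_mkcond; apply: eq_bigr => t _.
  rewrite SprodE.
  by case: (packed _); case: (WC _ == I); case: (segsorted _ _).
rewrite (partition_big (fun t => inord (maxl (word_of t)) : 'I_n.+1) xpredT) //.
apply: eq_bigr => r _; rewrite -(@per_r K n I J hJ r (ltn_ord r : (r <= n)%N)).
apply: eq_bigl => t; rewrite /Bp.
have mw : (maxl (word_of t) <= n)%N.
  by rewrite maxl_leq; apply/allP => x /word_bound /andP [].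
by rewrite -(inj_eq val_inj) /= inordK.
Qed.
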